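(* Let $X\subseteq\mathbb{R}^m$, $f=(f_1,\dots,f_d):X\to\mathbb{R}^d$ with $a_{i0}\le f_i(x)\le a_{in}$ for all $x\in X$, $i\in[d]$, and $\phi:\mathbb{R}^d\to\mathbb{R}$. Let $u:X\to\mathbb{R}^{d\times(n+1)}$ be a vector of convex functions such that for every $x\in X$ and $i\in[d]$: $u_{i0}(x)=a_{i0}$, $u_{in}(x)=f_i(x)$, and $u_{ij}(x)\le\min\{f_i(x),a_{ij}\}$ for $j\in[n-1]$. Let $W$ be a convex set containing $\{(x,s_{\cdot n})\mid s_{\cdot n}=f(x),\ x\in X\}$. Then $$\{(x,\mu)\mid \mu\le\phi(f(x)),\ x\in X\}\subseteq \operatorname{proj}_{(x,\mu)}\Bigl\{(x,\mu,s,\delta)\ \Bigm|\ \mu\le\operatorname{conc}_Q(\bar\phi)(s),\ (Z(s),\delta)\text{ satisfies (Inc-1)},\ u(x)\le s,\ (x,s_{\cdot n})\in W\Bigr\},$$ i.e. the right-hand set is an MICP relaxation of the hypograph of $\phi\circ f$.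
   Context: Let $d,n$ be positive integers, $[k]=\{1,\dots,k\}$. Let $a\in\mathbb{R}^{d\times(n+1)}$ with $a_{i0}<\dots<a_{in}$ for each $i$. For each $i$ let $0=\tau(i,0)<\tau(i,1)<\dots<\tau(i,l_i)=n$ be integers ($l_i\ge1$). Let $\Delta_i=\{z_i\in\mathbb{R}^{n+1}\mid1=z_{i0}\ge z_{i1}\ge\dots\ge z_{in}\ge0\}$. The system (Inc-1) in $(z,\delta)$, $\delta=(\delta_{it})_{i\in[d],t\in[l_i-1]}$: $z_i\in\Delta_i$, $\delta_{it}\in\{0,1\}$, $z_{i\tau(i,t)}\ge\delta_{it}\ge z_{i\tau(i,t)+1}$. For $s\in\mathbb{R}^{d\times(n+1)}$, $s_{\cdot n}=(s_{1n},\dots,s_{dn})$, and $Z(s)=(Z_1(s_1),\dots,Z_d(s_d))$ where $Z_i(s_i)=z_i$ with $z_{i0}=1$ and $z_{ij}=(s_{ij}-s_{i,j-1})/(a_{ij}-a_{i,j-1})$ for $j\in[n]$. Let $v_{ij}\in\mathbb{R}^{n+1}$ have $k$-th component $a_{i,\min\{k,j\}}$ ($k=0,\dots,n$), i.e. $v_{ij}=(a_{i0},\dots,a_{i,j-1},a_{ij},\dots,a_{ij})$; $Q_i=\operatorname{conv}\{v_{i0},\dots,v_{in}\}$, $Q=Q_1\times\dots\times Q_d$, and $\bar\phi:Q\to\mathbb{R}$, $\bar\phi(s)=\phi(s_{1n},\dots,s_{dn})$. $\operatorname{conc}_Q(\bar\phi)$ is the concave envelope of $\bar\phi$ over $Q$.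 *)

(* Defs.v *)
From mathcomp Require Import all_boot all_order all_algebra.
From mathcomp Require Import boolp classical_sets reals constructive_ereal ereal.

Set Implicit Arguments.
Unset Strict Implicit.
Unset Printing Implicit Defensive.

Import Order.TTheory GRing.Theory Num.Theory.
Local Open Scope ring_scope.
Local Open Scope classical_set_scope.

Section Defs.
Variable R : realType.

(* Indices: i ranges over 'I_d (0-based version of [d]), j over 0..n as
   'I_n.+1; the matrix a : 'M_(d, n.+1) has a i j = a_{ij}. *)

Definition ent (d n : nat) (s : 'M[R]_(d, n.+1)) (i : 'I_d) (j : nat) : R :=
  s i (inord j).

Definition Zmap (d n : nat) (a s : 'M[R]_(d, n.+1)) (i : 'I_d) (j : nat) : R :=
  if j == 0%N then 1
  else (ent s i j - ent s i j.-1) / (ent a i j - ent a i j.-1).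

Definition in_Delta (n : nat) (z : nat -> R) : Prop :=
  z 0%N = 1 /\ (forall j, (j < n)%N -> z j.+1 <= z j) /\ 0 <= z n.

Definition Inc1 (d n : nat) (l : 'I_d -> nat) (tau : 'I_d -> nat -> nat)
    (z : 'I_d -> nat -> R) (delta : 'I_d -> nat -> R) : Prop :=
  forall i : 'I_d,
    in_Delta n (z i) /\
    forall t : nat, (1 <= t)%N -> (t <= (l i).-1)%N ->
      (delta i t = 0 \/ delta i t = 1) /\
      z i (tau i t) >= delta i t /\ delta i t >= z i (tau i t).+1.

Definition vtx (d n : nat) (a : 'M[R]_(d, n.+1)) (i : 'I_d) (j : 'I_n.+1)
  : 'rV[R]_n.+1 := \row_(k < n.+1) a i (inord (minn k j)).

Definition Qi (d n : nat) (a : 'M[R]_(d, n.+1)) (i : 'I_d) : set 'rV[R]_n.+1 :=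
  [set v | exists lam : 'I_n.+1 -> R,
     (forall j, 0 <= lam j) /\ \sum_j lam j = 1 /\
     v = \sum_j lam j *: vtx a i j].

Definition Qset (d n : nat) (a : 'M[R]_(d, n.+1)) : set 'M[R]_(d, n.+1) :=
  [set s | forall i : 'I_d, Qi a i (row i s)].

Definition lastcol (d n : nat) (s : 'M[R]_(d, n.+1)) : 'rV[R]_d :=
  \row_(i < d) s i ord_max.

Definition phibar (d n : nat) (phi : 'rV[R]_d -> R) (s : 'M[R]_(d, n.+1)) : R :=
  phi (lastcol s).

(* Concave envelope of g over a set D:
   conc_D(g)(s) = sup { mu | (s, mu) \in conv(hypo g|_D) }
                = sup { sum_k lam_k g(s_k) | s = sum_k lam_k s_k, s_k \in D,
                        lam >= 0, sum_k lam_k = 1 }   (finite combinations),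
   valued in the extended reals (-oo outside conv D). *)
Definition conc {T : lmodType R} (D : set T) (g : T -> R) (s : T) : \bar R :=
  ereal_sup [set y : \bar R | exists (K : nat) (lam : 'I_K -> R) (S : 'I_K -> T),
     [/\ (forall k, 0 <= lam k), \sum_k lam k = 1, (forall k, D (S k)),
         s = \sum_k lam k *: S k & y = (\sum_k lam k * g (S k))%:E]].

(* g convex on X (X need not be convex: the inequality is required whenever
   the convex combination lies in X) *)
Definition convex_fun_on (m : nat) (X : set 'rV[R]_m) (g : 'rV[R]_m -> R) : Prop :=
  forall x y (t : R), X x -> X y -> 0 <= t -> t <= 1 ->
    X (t *: x + (1 - t) *: y) ->
    g (t *: x + (1 - t) *: y) <= t * g x + (1 - t) * g y.

Definition convex_set2 (m d : nat) (W : set ('rV[R]_m * 'rV[R]_d)) : Prop :=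
  forall p q (t : R), W p -> W q -> 0 <= t -> t <= 1 ->
    W (t *: p.1 + (1 - t) *: q.1, t *: p.2 + (1 - t) *: q.2).

End Defs.
Arguments Inc1 {R d} n l tau z delta.

(* Main.v *)
Require Import Defs.
From mathcomp Require Import all_boot all_order all_algebra.
From mathcomp Require Import boolp classical_sets reals constructive_ereal ereal.
From mathcomp Require Import lra zify ring.
Import Order.TTheory GRing.Theory Num.Theory.
Local Open Scope ring_scope.
Local Open Scope classical_set_scope.

Lemma zlem (R : realType) (A B F : R) : A < B ->
  let z := (Num.min F B - Num.min F A) / (B - A) in
  [/\ 0 <= z, z <= 1, (B <= F -> z = 1) & (F <= A -> z = 0)].
Proof.
move=> AB z; have hBA : 0 < B - A by rewrite subr_gt0.
have hne : B - A != 0 by rewrite gt_eqF.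
rewrite /z !minEle; split.
- apply: divr_ge0; last exact: ltW.
  by case: (leP F B); case: (leP F A) => *; lra.
- rewrite ler_pdivrMr // mul1r.
  by case: (leP F B); case: (leP F A) => *; lra.
- move=> BF; suff -> : (if F <= B then F else B) - (if F <= A then F else A) = B - A by rewrite divff.
  by case: (leP F B); case: (leP F A) => *; lra.
- move=> FA; suff -> : (if F <= B then F else B) - (if F <= A then F else A) = 0 by rewrite mul0r.
  by case: (leP F B); case: (leP F A) => *; lra.
Qed.

Lemma ind_sum (R : ringType) n (k : nat) (al : R) (g : 'I_n.+1 -> R) :
  (k <= n)%N ->
  \sum_(j < n.+1) (if val j == k then al else 0) * g j = al * g (inord k).
Proof.
move=> kn; rewrite (bigD1 (inord k)) //= inordK ?ltnS // eqxx big1 ?addr0 //.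
move=> j hj; case: ifP => hjk; last by rewrite mul0r.
have ejk : j = inord k by apply/val_inj; rewrite /= inordK ?ltnS // (eqP hjk).
by rewrite ejk eqxx in hj.
Qed.

Lemma tau_lt (l : nat) (tau : nat -> nat) :
  (forall t, (t < l)%N -> (tau t < tau t.+1)%N) ->
  forall k t, (t + k.+1 <= l)%N -> (tau t < tau (t + k.+1))%N.
Proof.
move=> H; elim=> [|k IH] t h; first by rewrite addn1; apply: H; rewrite -addn1.
apply: (ltn_trans (IH t _)); first by apply: leq_trans h; rewrite leq_add2l.
rewrite (addnS t k.+1); apply: H; by rewrite -addnS.
Qed.

Lemma Amono (R : realType) (A : nat -> R) n :
  (forall j, (j < n)%N -> A j < A j.+1) ->
  forall j j', (j <= j')%N -> (j' <= n)%N -> A j <= A j'.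
Proof.
move=> H j; elim=> [|j' IH] hjj hn; first by move: hjj; rewrite leqn0 => /eqP ->.
case: (ltngtP j j'.+1) hjj => // [hlt|->] _; last by [].
by apply: le_trans (IH hlt (ltnW hn)) _; apply/ltW/H.
Qed.

Lemma kex (R : realType) (A : nat -> R) n F : (0 < n)%N ->
  (forall j, (j < n)%N -> A j < A j.+1) -> A 0%N <= F -> F <= A n ->
  exists k, [/\ (k < n)%N, A k <= F & F <= A k.+1].
Proof.
move=> n0 H h0 hn.
have P : forall j, (j <= n)%N ->
   (exists k, [/\ (k < j)%N, A k <= F & F <= A k.+1]) \/ A j <= F.
  elim=> [|j IH] hj; first by right.
  case: (IH (ltnW hj)) => [[k [k1 k2 k3]]|hA]; first by left; exists k; split=> //; apply: ltnW.
  case: (leP F (A j.+1)) => h; first by left; exists j.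
  by right; apply: ltW.
case: (P n (leqnn n)) => [[k [k1 k2 k3]]|hA]; first by exists k.
have e : n = n.-1.+1 by rewrite prednK.
exists n.-1; split; first by rewrite -e.
  apply: le_trans hA; apply: ltW; rewrite {2}e; apply: H; by rewrite -e.
by rewrite -e.
Qed.

Lemma ind_sum1 (R : ringType) n (k : nat) (al : R) :
  (k <= n)%N -> \sum_(j < n.+1) (if val j == k then al else 0) = al.
Proof.
move=> kn; rewrite -[RHS]mulr1 -(@ind_sum R n k al (fun _ => 1) kn).
by apply: eq_bigr => j _; rewrite mulr1.
Qed.

Theorem theorem4p1 (R : realType) (m d n : nat) (a : 'M[R]_(d, n.+1))
  (l : 'I_d -> nat) (tau : 'I_d -> nat -> nat)
  (X : set 'rV[R]_m) (f : 'rV[R]_m -> 'rV[R]_d) (phi : 'rV[R]_d -> R)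
  (u : 'rV[R]_m -> 'M[R]_(d, n.+1)) (W : set ('rV[R]_m * 'rV[R]_d)) :
  (0 < d)%N -> (0 < n)%N ->
  (forall (i : 'I_d) (j : nat), (j < n)%N -> ent a i j < ent a i j.+1) ->
  (forall i : 'I_d, (1 <= l i)%N) ->
  (forall i : 'I_d, tau i 0%N = 0%N) ->
  (forall i : 'I_d, tau i (l i) = n) ->
  (forall (i : 'I_d) (t : nat), (t < l i)%N -> (tau i t < tau i t.+1)%N) ->
  (forall x, X x -> forall i : 'I_d,
      a i ord0 <= f x ord0 i /\ f x ord0 i <= a i ord_max) ->
  (forall (i : 'I_d) (j : 'I_n.+1), convex_fun_on X (fun x => u x i j)) ->
  (forall x, X x -> forall i : 'I_d,
      [/\ u x i ord0 = a i ord0,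
          u x i ord_max = f x ord0 i &
          forall j : 'I_n.+1, (1 <= j)%N -> (j <= n.-1)%N ->
            u x i j <= Num.min (f x ord0 i) (a i j)]) ->
  convex_set2 W ->
  (forall x, X x -> W (x, f x)) ->
  forall (x : 'rV[R]_m) (mu : R), X x -> mu <= phi (f x) ->
    exists (s : 'M[R]_(d, n.+1)) (delta : 'I_d -> nat -> R),
      [/\ (mu%:E <= conc (Qset a) (phibar phi) s)%E,
          Inc1 n l tau (Zmap a s) delta,
          (forall (i : 'I_d) (j : 'I_n.+1), u x i j <= s i j) &
          W (x, lastcol s)].
Proof.
move=> d0 n0 ha hl ht0 htl htinc hf hconv hu hW hWf x mu Xx hmu.
pose s : 'M[R]_(d, n.+1) := \matrix_(i, j) Num.min (f x ord0 i) (a i j).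
have entS : forall i j, ent s i j = Num.min (f x ord0 i) (ent a i j).
  by move=> i j; rewrite /ent mxE.
have e0 : inord 0 = ord0 :> 'I_n.+1 by apply/val_inj; rewrite /= inordK.
have en : inord n = ord_max :> 'I_n.+1 by apply/val_inj; rewrite /= inordK.
have lastS : lastcol s = f x.
  apply/rowP => i; rewrite !mxE min_l //; last exact: (hf x Xx i).2.
have Zp : forall i j, (j <= n)%N -> [/\ 0 <= Zmap a s i j, Zmap a s i j <= 1 &
     (ent a i j <= f x ord0 i -> Zmap a s i j = 1)].
  move=> i [|j] jn; first by rewrite /Zmap eqxx; split => //; apply: ler01.
  have [z0 z1 zB zA] := @zlem R _ _ (f x ord0 i) (ha i j jn).
  by rewrite /Zmap /= !entS; split.
have Z0 : forall i j, (j < n)%N -> f x ord0 i <= ent a i j -> Zmap a s i j.+1 = 0.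
  move=> i j jn h.
  have [z0 z1 zB zA] := @zlem R _ _ (f x ord0 i) (ha i j jn).
  by rewrite /Zmap /= !entS zA.
exists s, (fun i t => if ent a i (tau i t) <= f x ord0 i then 1 else 0).
split.
- apply: (@le_trans _ _ (phibar phi s)%:E).
    by rewrite lee_fin /phibar lastS.
  apply: ereal_sup_ubound.
  exists 1%N, (fun _ => 1), (fun _ => s); split.
  + by move=> _; apply: ler01.
  + by rewrite big_ord1.
  + move=> _ i.
    have [f0 fn] := hf x Xx i.
    have [k [kn k1 k2]] := @kex R (ent a i) n (f x ord0 i) n0 (ha i)
      ltac:(by rewrite /ent e0) ltac:(by rewrite /ent en).
    have hk := ha i k kn.
    have hne : ent a i k.+1 - ent a i k != 0 by apply/eqP; lra.
    pose al := (ent a i k.+1 - f x ord0 i) / (ent a i k.+1 - ent a i k).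
    pose be := (f x ord0 i - ent a i k) / (ent a i k.+1 - ent a i k).
    have albe : al + be = 1.
      rewrite /al /be -mulrDl.
      have -> : ent a i k.+1 - f x ord0 i + (f x ord0 i - ent a i k)
               = ent a i k.+1 - ent a i k by ring.
      by rewrite divff.
    exists (fun j : 'I_n.+1 => (if val j == k then al else 0)
                             + (if val j == k.+1 then be else 0)).
    split; [|split].
    * move=> j; apply: addr_ge0; case: ifP => _ //;
        apply: divr_ge0; lra.
    * by rewrite big_split /= !ind_sum1 // (ltnW kn).
    * apply/rowP => c; rewrite !mxE summxE.
      rewrite (eq_bigr (fun j : 'I_n.+1 => ((if val j == k then al else 0)
           + (if val j == k.+1 then be else 0)) * a i (inord (minn c j)))); last first.
        by move=> j _; rewrite !mxE.
      rewrite (eq_bigr (fun j : 'I_n.+1 => (if val j == k then al else 0) * a i (inord (minn c j))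
           + (if val j == k.+1 then be else 0) * a i (inord (minn c j)))); last first.
        by move=> j _; rewrite mulrDl.
      rewrite big_split /= (@ind_sum R n k al (fun j : 'I_n.+1 => a i (inord (minn c j)))) ?(ltnW kn) //.
      rewrite (@ind_sum R n k.+1 be (fun j : 'I_n.+1 => a i (inord (minn c j)))) //.
      rewrite !inordK ?ltnS ?(ltnW kn) //.
      have Am := @Amono R (ent a i) n (ha i).
      have ac : a i c = ent a i c by rewrite /ent inord_val.
      case: (leqP c k) => ck.
        rewrite (minn_idPl (leqW ck)) inord_val -mulrDl albe mul1r.
        rewrite min_r // ac; apply: le_trans k1; apply: Am => //; exact: ltnW.
      rewrite (minn_idPr ck).
      rewrite min_l; last first.
        rewrite ac; apply: le_trans k2 _; apply: Am => //; rewrite -ltnS; exact: ltn_ord.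
      rewrite -/(ent a i k) -/(ent a i k.+1) /al /be.
      by field.
  + by rewrite big_ord1 scale1r.
  + by rewrite big_ord1 mul1r.
- move=> i; split.
    split; first by rewrite /Zmap eqxx.
    split; last by case: (Zp i n (leqnn n)).
    move=> j jn; case: (leP (f x ord0 i) (ent a i j)) => h.
      by rewrite Z0 //; case: (Zp i j (ltnW jn)).
    have [_ _ ->] := Zp i j (ltnW jn); last exact: ltW h.
    by case: (Zp i j.+1 jn).
  move=> t t1 tl.
  have taun : (tau i t < n)%N.
    have tli : (t < l i)%N by move: (hl i) tl; lia.
    have := @tau_lt _ _ (htinc i) (l i - t.+1) t.
    have -> : (t + (l i - t.+1).+1 = l i)%N by lia.
    by rewrite htl; apply.
  case: ifP => h.
    split; first by right.
    split; first by have [_ _ ->] := Zp i _ (ltnW taun).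
    by case: (Zp i _ taun).
  split; first by left.
  split; first by case: (Zp i _ (ltnW taun)).
  rewrite Z0 //; apply: ltW; by rewrite ltNge h.
- move=> i j; rewrite mxE.
  have [u0 un umid] := hu x Xx i; have [f0 fn] := hf x Xx i.
  case: (eqVneq (val j) 0%N) => j0.
    have -> : j = ord0 by apply/val_inj.
    by rewrite u0 le_min lexx f0.
  case: (eqVneq (val j) n) => jn.
    have -> : j = ord_max by apply/val_inj.
    by rewrite un le_min lexx fn.
  apply: umid; first by rewrite lt0n.
  have := ltn_ord j; move: jn.
  move=> /eqP jn1 jl; have jn2 : nat_of_ord j <> n := jn1; lia.
- by rewrite lastS; apply: hWf.
Qed.
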